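(* Let $n,m$ be integers with $0<m<n$. Then for every $k=1,\ldots,n$ and $x\in[-1,1]$, $$\tilde\varphi_{n,k}^m(x)=\sqrt{\frac{\pi}{n}}\sum_{h=1}^n\left[\sum_{r=0}^{n-1}\frac{p_r(x_k^n)p_r(x_h^n)}{\sqrt{\nu_{n,r}^m}}\right]\Phi_{n,h}^m(x).$$
   Context: The orthonormal Chebyshev polynomials are $p_0(x)=\sqrt{1/\pi}$ and $p_r(x)=\sqrt{2/\pi}\cos(r\arccos x)$ for $r\ge1$, $x\in[-1,1]$. The Chebyshev nodes are $x_k^n=\cos\frac{(2k-1)\pi}{2n}$, $k=1,\ldots,n$. For $0<m<n$ set $\mu_{n,r}^m=1$ if $0\le r\le n-m$, $\mu_{n,r}^m=\frac{m+n-r}{2m}$ if $n-m<r<n+m$, and $\mu_{n,r}^m=0$ otherwise. The interpolating VP scaling functions are $\Phi_{n,k}^m(x)=\frac{\pi}{n}\sum_{r=0}^{n+m-1}\mu_{n,r}^m p_r(x_k^n)p_r(x)$, $k=1,\ldots,n$. For $r=0,\ldots,n-1$ define $q_{n,r}^m=p_r$ if $0\le r\le n-m$, and $q_{n,r}^m=\mu_{n,r}^m p_r-\mu_{n,2n-r}^m p_{2n-r}$ if $n-m<r<n$; set $\nu_{n,r}^m=1$ if $0\le r\le n-m$ and $\nu_{n,r}^m=\frac{m^2+(n-r)^2}{2m^2}$ if $n-m<r<n$. The orthonormal VP scaling functions are $\tilde\varphi_{n,k}^m(x)=\sum_{r=0}^{n-1}\sqrt{\frac{\pi}{n\,\nu_{n,r}^m}}\,p_r(x_k^n)\,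 q_{n,r}^m(x)$, $k=1,\ldots,n$. *)

(* Defs.v *)
From Stdlib Require Import Reals.
Open Scope R_scope.

Fixpoint bsum (N : nat) (f : nat -> R) : R :=
  match N with O => 0 | S N' => bsum N' f + f N' end.

Definition cheb_p (r : nat) (x : R) : R :=
  match r with
  | O => sqrt (1 / PI)
  | _ => sqrt (2 / PI) * cos (INR r * acos x)
  end.

Definition cheb_node (n k : nat) : R :=
  cos ((2 * INR k - 1) * PI / (2 * INR n)).

Definition mu (n m r : nat) : R :=
  if (r <=? n - m)%nat then 1
  else if (r <? n + m)%nat then (INR m + INR n - INR r) / (2 * INR m)
  else 0.

Definition nu (n m r : nat) : R :=
  if (r <=? n - m)%nat then 1
  else (INR m ^ 2 + (INR n - INR r) ^ 2) / (2 * INR m ^ 2).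

Definition q (n m r : nat) (x : R) : R :=
  if (r <=? n - m)%nat then cheb_p r x
  else mu n m r * cheb_p r x - mu n m (2 * n - r) * cheb_p (2 * n - r) x.

Definition Phi (n m k : nat) (x : R) : R :=
  PI / INR n * bsum (n + m) (fun r => mu n m r * cheb_p r (cheb_node n k) * cheb_p r x).

Definition phi_tilde (n m k : nat) (x : R) : R :=
  bsum n (fun r => sqrt (PI / (INR n * nu n m r)) * cheb_p r (cheb_node n k) * q n m r x).

(* Main.v *)
Require Import Defs.
From Stdlib Require Import Reals Lra Lia.
Open Scope R_scope.

Lemma bsum_ext N f g : (forall i, (i < N)%nat -> f i = g i) -> bsum N f = bsum N g.
Proof. induction N; simpl; intros H; auto. rewrite IHN by (intros; apply H; lia). rewrite H by lia. ring. Qed.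

Lemma bsum_plus N f g : bsum N (fun i => f i + g i) = bsum N f + bsum N g.
Proof. induction N; simpl; [ring|]. rewrite IHN; ring. Qed.

Lemma bsum_minus N f g : bsum N (fun i => f i - g i) = bsum N f - bsum N g.
Proof. induction N; simpl; [ring|]. rewrite IHN; ring. Qed.

Lemma bsum_scal N c f : bsum N (fun i => c * f i) = c * bsum N f.
Proof. induction N; simpl; [ring|]. rewrite IHN; ring. Qed.

Lemma bsum_const N c : bsum N (fun _ => c) = INR N * c.
Proof. induction N; simpl bsum; [simpl; ring|]. rewrite IHN, S_INR; ring. Qed.

Lemma bsum_swap N M f : bsum N (fun i => bsum M (fun j => f i j)) = bsum M (fun j => bsum N (fun i => f i j)).
Proof. induction N; simpl. - induction M; simpl; auto. rewrite <- IHM; ring.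
 - rewrite IHN, bsum_plus. reflexivity. Qed.

Lemma bsum_delta N f j : bsum N (fun s => f s * (if Nat.eqb s j then 1 else 0)) = if Nat.ltb j N then f j else 0.
Proof. induction N; simpl; auto. rewrite IHN.
 destruct (Nat.eqb_spec N j); destruct (Nat.ltb_spec j N); destruct (Nat.ltb_spec j (S N)); subst; try lia; ring. Qed.

Lemma sumcos_id n a : 2 * sin a * bsum n (fun h => cos ((2 * INR h + 1) * a)) = sin (2 * INR n * a).
Proof. induction n; simpl bsum. - simpl; replace (2 * 0 * a) with 0 by ring; rewrite sin_0; ring.
 - rewrite Rmult_plus_distr_l, IHn, S_INR.
   replace (2 * (INR n + 1) * a) with ((2 * INR n + 1) * a + a) by ring.
   replace (2 * INR n * a) with ((2 * INR n + 1) * a - a) at 1 by ring.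
   rewrite sin_plus, sin_minus; ring. Qed.

Lemma sumcos_zero n a : sin a <> 0 -> sin (2 * INR n * a) = 0 -> bsum n (fun h => cos ((2 * INR h + 1) * a)) = 0.
Proof. intros H1 H2. pose proof (sumcos_id n a) as E. rewrite H2 in E.
 apply Rmult_integral in E. destruct E as [E|E]; auto. lra. Qed.

Lemma sumcos_2n n : (0 < n)%nat -> bsum n (fun h => cos ((2 * INR h + 1) * (2 * INR n * PI / (2 * INR n)))) = - INR n.
Proof. intros Hn. assert (0 < INR n) by (apply lt_0_INR; lia).
 rewrite (bsum_ext _ _ (fun _ => -1)). rewrite bsum_const; ring.
 intros i _. replace ((2 * INR i + 1) * (2 * INR n * PI / (2 * INR n))) with (PI + 2 * INR i * PI) by (field; lra).
 rewrite cos_period, cos_PI; auto. Qed.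

Lemma sumcos_0 n : bsum n (fun h => cos ((2 * INR h + 1) * (0 * PI / (2 * INR n)))) = INR n.
Proof. rewrite (bsum_ext _ _ (fun _ => 1)). rewrite bsum_const; ring.
 intros; unfold Rdiv; rewrite !Rmult_0_l, Rmult_0_r, cos_0; auto. Qed.

Lemma sumcos_int n (z : Z) : (0 < n)%nat -> IZR z <> 0 -> -(2 * INR n) < IZR z < 4 * INR n -> IZR z <> 2 * INR n ->
  bsum n (fun h => cos ((2 * INR h + 1) * (IZR z * PI / (2 * INR n)))) = 0.
Proof. intros Hn Hz [Hl Hu] H2. assert (0 < INR n) by (apply lt_0_INR; lia). pose proof PI_RGT_0.
 apply sumcos_zero.
 - assert (IZR z < 0 \/ 0 < IZR z < 2 * INR n \/ 2 * INR n < IZR z) as [C|[C|C]] by lra.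
   + assert (0 < sin (- (IZR z * PI / (2 * INR n)))). { apply sin_gt_0.
       * replace (- (IZR z * PI / (2 * INR n))) with ((- IZR z) * PI * / (2 * INR n)) by (field; lra). apply Rmult_lt_0_compat; [|apply Rinv_0_lt_compat; lra]. nra.
       * apply (Rmult_lt_reg_r (2 * INR n)); [lra|]. field_simplify; [|lra]. nra. }
     rewrite sin_neg in H1. lra.
   + assert (0 < sin (IZR z * PI / (2 * INR n))). { apply sin_gt_0.
       * unfold Rdiv. apply Rmult_lt_0_compat; [|apply Rinv_0_lt_compat; lra]. nra.
       * apply (Rmult_lt_reg_r (2 * INR n)); [lra|]. field_simplify; [|lra]. nra. }
     lra.
   + assert (sin (IZR z * PI / (2 * INR n)) < 0). { apply sin_lt_0.
       * apply (Rmult_lt_reg_r (2 * INR n)); [lra|]. field_simplify; [|lra]. nra.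
       * apply (Rmult_lt_reg_r (2 * INR n)); [lra|]. field_simplify; [|lra]. nra. }
     lra.
 - apply sin_eq_0_1. exists z. field. lra. Qed.

Definition cc (r : nat) : R := if Nat.eqb r 0 then sqrt (1 / PI) else sqrt (2 / PI).

Lemma p_node n h r : (h < n)%nat -> cheb_p r (cheb_node n (S h)) =
  cc r * cos (INR r * ((2 * INR h + 1) * (PI / (2 * INR n)))).
Proof. intros Hh. assert (0 < INR n) by (apply lt_0_INR; lia). pose proof PI_RGT_0.
 assert (INR h + 1 <= INR n) by (rewrite <- S_INR; apply le_INR; lia). pose proof (pos_INR h).
 unfold cheb_node. rewrite S_INR.
 replace ((2 * (INR h + 1) - 1) * PI / (2 * INR n)) with ((2 * INR h + 1) * (PI / (2 * INR n))) by (field; lra).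
 assert (Hy: acos (cos ((2 * INR h + 1) * (PI / (2 * INR n)))) = (2 * INR h + 1) * (PI / (2 * INR n))).
 { apply acos_cos. split.
   - apply Rmult_le_pos; [lra|]. unfold Rdiv; apply Rmult_le_pos; [lra|]. left; apply Rinv_0_lt_compat; lra.
   - apply (Rmult_le_reg_r (2 * INR n)); [lra|]. field_simplify; [|lra]. nra. }
 unfold cheb_p, cc. destruct r; simpl Nat.eqb.
 - simpl INR. rewrite Rmult_0_l, cos_0; ring.
 - rewrite Hy; auto. Qed.

Lemma cc_sq r : cc r * cc r = if Nat.eqb r 0 then 1 / PI else 2 / PI.
Proof. pose proof PI_RGT_0. unfold cc; destruct (Nat.eqb r 0); apply sqrt_sqrt; unfold Rdiv; 
  apply Rmult_le_pos; try lra; left; apply Rinv_0_lt_compat; lra. Qed.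

Lemma Dlem n r s : (0 < n)%nat -> (r < n)%nat -> (s < 2 * n)%nat ->
  PI / INR n * bsum n (fun h => cheb_p r (cheb_node n (S h)) * cheb_p s (cheb_node n (S h)))
  = (if Nat.eqb r s then 1 else 0) - (if Nat.eqb s (2 * n - r) then 1 else 0).
Proof. intros Hn Hr Hs. assert (0 < INR n) by (apply lt_0_INR; lia). pose proof PI_RGT_0.
 rewrite (bsum_ext _ _ (fun h => cc r * cc s / 2 *
   (cos ((2 * INR h + 1) * ((INR r - INR s) * PI / (2 * INR n))) +
    cos ((2 * INR h + 1) * ((INR r + INR s) * PI / (2 * INR n)))))).
 2:{ intros h Hh. rewrite !p_node by auto.
     set (y := (2 * INR h + 1) * (PI / (2 * INR n))).
     replace ((2 * INR h + 1) * ((INR r - INR s) * PI / (2 * INR n))) with (INR r * y - INR s * y) by (unfold y; field; lra).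
     replace ((2 * INR h + 1) * ((INR r + INR s) * PI / (2 * INR n))) with (INR r * y + INR s * y) by (unfold y; field; lra).
     rewrite cos_minus, cos_plus. field. }
 rewrite bsum_scal, bsum_plus.
 assert (HINR: forall a b, (a < b)%nat -> INR a < INR b) by (intros; apply lt_INR; auto).
 assert (H2n: INR (2 * n) = 2 * INR n) by (rewrite mult_INR; simpl; ring).
 assert (H4n: INR (4 * n) = 4 * INR n) by (rewrite mult_INR; simpl; ring).
 assert (Fm0: r <> s -> bsum n (fun h => cos ((2 * INR h + 1) * ((INR r - INR s) * PI / (2 * INR n)))) = 0).
 { intros Hne. rewrite (INR_IZR_INZ r), (INR_IZR_INZ s), <- minus_IZR. apply sumcos_int; auto.
   + apply not_0_IZR. lia.
   + rewrite minus_IZR, <- !INR_IZR_INZ. pose proof (HINR r n Hr). pose proof (HINR s _ Hs).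
     pose proof (pos_INR r). pose proof (pos_INR s). lra.
   + rewrite minus_IZR, <- !INR_IZR_INZ. pose proof (HINR r n Hr). pose proof (pos_INR s). lra. }
 assert (Fp0: (r + s <> 0)%nat -> (r + s <> 2 * n)%nat -> bsum n (fun h => cos ((2 * INR h + 1) * ((INR r + INR s) * PI / (2 * INR n)))) = 0).
 { intros H1 H2. rewrite <- plus_INR, (INR_IZR_INZ (r + s)). apply sumcos_int; auto.
   + apply not_0_IZR. lia.
   + rewrite <- INR_IZR_INZ. assert (0 < INR (r + s)) by (apply lt_0_INR; lia). split; [lra|].
     rewrite <- H4n. apply HINR; lia.
   + rewrite <- INR_IZR_INZ, <- H2n. intro E. apply INR_eq in E. lia. }
 rewrite !(Rmult_comm (PI / INR n)).
 destruct (Nat.eqb_spec r s) as [E|E].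
 - subst s. replace (INR r - INR r) with 0 by ring. rewrite sumcos_0.
   destruct (Nat.eqb_spec r (2 * n - r)); [lia|].
   destruct (Nat.eqb_spec r 0) as [E0|E0].
   + subst r. replace (INR 0 + INR 0) with 0 by (simpl; ring). rewrite sumcos_0.
     replace (cc 0 * cc 0 / 2 * (INR n + INR n) * (PI / INR n)) with ((cc 0 * cc 0) * PI) by (field; lra).
     rewrite cc_sq. simpl. field. lra.
   + rewrite Fp0 by lia.
     replace (cc r * cc r / 2 * (INR n + 0) * (PI / INR n)) with ((cc r * cc r) * PI / 2) by (field; lra).
     rewrite cc_sq. destruct (Nat.eqb_spec r 0); [lia|]. field. lra.
 - rewrite Fm0 by auto.
   destruct (Nat.eqb_spec s (2 * n - r)) as [E2|E2].
   + replace (INR r + INR s) with (2 * INR n) by (rewrite <- plus_INR, <- H2n; f_equal; lia).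
     rewrite sumcos_2n by auto.
     replace (cc r * cc s) with (cc r * cc r).
     2:{ unfold cc. destruct (Nat.eqb_spec r 0); destruct (Nat.eqb_spec s 0); try lia; auto. }
     rewrite cc_sq. destruct (Nat.eqb_spec r 0); [lia|]. field. lra.
   + rewrite Fp0 by lia. ring. Qed.

Lemma bsum_scal_r N c f : bsum N (fun i => f i * c) = bsum N f * c.
Proof. induction N; simpl; [ring|]. rewrite IHN; ring. Qed.

Lemma inner n m r x : (0 < m)%nat -> (m < n)%nat -> (r < n)%nat ->
  PI / INR n * bsum n (fun h => cheb_p r (cheb_node n (S h)) *
     bsum (n + m) (fun s => mu n m s * cheb_p s (cheb_node n (S h)) * cheb_p s x)) = q n m r x.
Proof. intros Hm Hmn Hr.
 rewrite (bsum_ext _ _ (fun h => bsum (n + m) (fun s => mu n m s * cheb_p s x *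
     (cheb_p r (cheb_node n (S h)) * cheb_p s (cheb_node n (S h)))))).
 2:{ intros h _. rewrite <- bsum_scal. apply bsum_ext; intros; ring. }
 rewrite bsum_swap, <- bsum_scal.
 rewrite (bsum_ext _ _ (fun s => mu n m s * cheb_p s x *
    ((if Nat.eqb s r then 1 else 0) - (if Nat.eqb s (2 * n - r) then 1 else 0)))).
 2:{ intros s Hs. rewrite bsum_scal.
     replace (Nat.eqb s r) with (Nat.eqb r s) by (apply Nat.eqb_sym).
     rewrite <- Dlem by lia. ring. }
 rewrite (bsum_ext _ _ (fun s => mu n m s * cheb_p s x * (if Nat.eqb s r then 1 else 0) -
        mu n m s * cheb_p s x * (if Nat.eqb s (2 * n - r) then 1 else 0))) by (intros; ring).
 rewrite bsum_minus, !(bsum_delta (n + m) (fun s => mu n m s * cheb_p s x)).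
 unfold q. destruct (Nat.ltb_spec r (n + m)); [|lia].
 destruct (Nat.leb_spec r (n - m)).
 - destruct (Nat.ltb_spec (2 * n - r) (n + m)); [lia|].
   unfold mu. destruct (Nat.leb_spec r (n - m)); [ring|lia].
 - destruct (Nat.ltb_spec (2 * n - r) (n + m)); [ring|lia].
Qed.

Lemma nu_pos n m r : (0 < m)%nat -> 0 < nu n m r.
Proof. intros Hm. assert (0 < INR m) by (apply lt_0_INR; lia). unfold nu. destruct (Nat.leb _ _); [lra|].
 assert (0 < INR m ^ 2) by (apply pow_lt; lra). pose proof (pow2_ge_0 (INR n - INR r)).
 apply Rmult_lt_0_compat; [lra|]. apply Rinv_0_lt_compat; lra. Qed.

Theorem proposition2 (n m k : nat) (x : R) :
  (0 < m)%nat -> (m < n)%nat -> (1 <= k <= n)%nat -> -1 <= x <= 1 ->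
  phi_tilde n m k x =
  sqrt (PI / INR n) *
  bsum n (fun h' =>
    bsum n (fun r => cheb_p r (cheb_node n k) * cheb_p r (cheb_node n (S h'))
                     / sqrt (nu n m r))
    * Phi n m (S h') x).
Proof. intros Hm Hmn Hk Hx. pose proof PI_RGT_0. assert (0 < INR n) by (apply lt_0_INR; lia).
 rewrite (bsum_ext _ _ (fun h => bsum n (fun r => cheb_p r (cheb_node n k) / sqrt (nu n m r) * (PI / INR n *
    (cheb_p r (cheb_node n (S h)) * bsum (n + m) (fun s => mu n m s * cheb_p s (cheb_node n (S h)) * cheb_p s x)))))).
 2:{ intros h _. unfold Phi. rewrite <- bsum_scal_r. apply bsum_ext; intros. field.
     split; [lra|]. apply Rgt_not_eq, sqrt_lt_R0, nu_pos; auto. }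
 rewrite bsum_swap.
 rewrite (bsum_ext _ _ (fun r => cheb_p r (cheb_node n k) / sqrt (nu n m r) * q n m r x)).
 2:{ intros r Hr. rewrite bsum_scal. f_equal. rewrite <- (inner n m r x) by auto. rewrite <- bsum_scal.
     apply bsum_ext; intros; ring. }
 unfold phi_tilde. rewrite <- bsum_scal. apply bsum_ext. intros r Hr.
 pose proof (nu_pos n m r Hm). pose proof (sqrt_lt_R0 _ H1).
 replace (PI / (INR n * nu n m r)) with (PI / INR n * / nu n m r) by (field; lra).
 rewrite sqrt_mult_alt, sqrt_inv. field. lra.
 unfold Rdiv; apply Rmult_le_pos; [lra|]. left; apply Rinv_0_lt_compat; lra.
Qed.
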